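(* Let $x_1,\ldots,x_m,y_1,\ldots,y_n$ be elements of a nilpotent group $\Gamma$, regarded as $m+n$ distinct letters. Then there is a finite list $\eta_1,\ldots,\eta_r$ of formal commutators in the $x_i$ and $y_j$ such that: (i) in $\Gamma$, $[x_1\cdots x_m,y_1\cdots y_n]=\eta_1\cdots\eta_r$; (ii) for each pair $(i,i')$ some $\eta_j$ equals $[x_i,y_{i'}]$; (iii) every $\eta_j$ has at least one $x_i$ and at least one $y_{i'}$ among its arguments; (iv) the $\eta_j$ are pairwise distinct as formal commutators in the $x_i,y_{i'}$; (v) no $\eta_j$ has a component of the form $[x_i,x_{i'}]$ or $[y_i,y_{i'}]$; (vi) if $\eta_j$ is not of the form $[x_i,y_{i'}]$ then $\eta_j$ has total weight greater than 2.
   Context: $[u,v]=u^{-1}v^{-1}uv$. Formal commutators in letters: each letter is one, and $[\beta,\beta']$ is one whenever $\beta,\beta'$ are; they are interpreted in the group in the obvious way. The arguments of a formal commutator are the letters occurring in it; its total weight is the number of letter occurrences. Components: $C(x)=\{x\}$ for a letter and $C([\beta,\beta'])=C(\beta)\cup C(\beta')\cup\{[\beta,\beta']\}$. *)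

(* Defs.v *)
From Stdlib Require Import List.
From mathcomp Require Import all_boot.

Set Implicit Arguments.
Unset Strict Implicit.
Unset Printing Implicit Defensive.

Record group := Group {
  gcar :> Type;
  gmul : gcar -> gcar -> gcar;
  gone : gcar;
  ginv : gcar -> gcar;
  gmulA : forall a b c, gmul a (gmul b c) = gmul (gmul a b) c;
  gmul1g : forall a, gmul gone a = a;
  gmulVg : forall a, gmul (ginv a) a = gone
}.

Section GroupDefs.
Variable G : group.

Definition gcomm (u v : G) : G :=
  gmul (gmul (gmul (ginv u) (ginv v)) u) v.

Inductive gen (S : G -> Prop) : G -> Prop :=
  | gen_in g : S g -> gen S g
  | gen_one : gen S (@gone G)
  | gen_mul a b : gen S a -> gen S b -> gen S (gmul a b)
  | gen_inv a : gen S a -> gen S (ginv a).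

(* lower central series: lcs 0 = gamma_1 = G, lcs (k+1) = [lcs k, G] *)
Fixpoint lcs (k : nat) : G -> Prop :=
  match k with
  | 0 => fun _ => True
  | k'.+1 => gen (fun g => exists a b, lcs k' a /\ g = gcomm a b)
  end.

Definition nilpotent : Prop := exists c, forall g, lcs c g -> g = gone G.

Definition gprod (s : seq G) : G := foldr (@gmul G) (@gone G) s.
End GroupDefs.

Inductive fcomm (L : Type) : Type :=
  | FLet : L -> fcomm L
  | FComm : fcomm L -> fcomm L -> fcomm L.
Arguments FLet {L}.
Arguments FComm {L}.

Fixpoint feval (G : group) (L : Type) (v : L -> G) (b : fcomm L) : G :=
  match b with
  | FLet x => v x
  | FComm b1 b2 => gcomm (feval v b1) (feval v b2)
  end.

Fixpoint occurs (L : Type) (x : L) (b : fcomm L) : Prop :=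
  match b with
  | FLet y => y = x
  | FComm b1 b2 => occurs x b1 \/ occurs x b2
  end.

Fixpoint fweight (L : Type) (b : fcomm L) : nat :=
  match b with
  | FLet _ => 1
  | FComm b1 b2 => fweight b1 + fweight b2
  end.

Fixpoint component (L : Type) (c b : fcomm L) : Prop :=
  match b with
  | FLet _ => c = b
  | FComm b1 b2 => component c b1 \/ component c b2 \/ c = b
  end.

(* Main.v *)
Require Import Defs.
From Stdlib Require Import List.
From mathcomp Require Import all_boot.

Set Implicit Arguments.
Unset Strict Implicit.
Unset Printing Implicit Defensive.

Section GroupLemmas.
Variable G : group.
Local Notation "a \* b" := (@gmul G a b) (at level 40, left associativity).
Local Notation "1" := (@gone G).
Local Notation inv := (@ginv G).

Lemma mulgV (a : G) : a \* inv a = 1.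
Proof.
rewrite -[a \* inv a]gmul1g -{1}(gmulVg (inv a)).
by rewrite -gmulA (gmulA (inv a)) gmulVg gmul1g gmulVg.
Qed.

Lemma mulg1 (a : G) : a \* 1 = a.
Proof. by rewrite -(gmulVg a) gmulA mulgV gmul1g. Qed.

Lemma mulKg (a b : G) : inv a \* (a \* b) = b.
Proof. by rewrite gmulA gmulVg gmul1g. Qed.

Lemma mulKVg (a b : G) : a \* (inv a \* b) = b.
Proof. by rewrite gmulA mulgV gmul1g. Qed.

Lemma invg1 : inv 1 = 1.
Proof. by rewrite -{2}(gmulVg 1) mulg1. Qed.

Lemma invMg (a b : G) : inv (a \* b) = inv b \* inv a.
Proof.
have H : a \* b \* (inv b \* inv a) = 1 by rewrite -!gmulA mulKVg mulgV.
by rewrite -[inv (a \* b)]mulg1 -H gmulA gmulVg gmul1g.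
Qed.

Definition gconj (g h : G) := inv h \* g \* h.

Lemma conjM a b h : gconj (a \* b) h = gconj a h \* gconj b h.
Proof. by rewrite /gconj -!gmulA mulKVg. Qed.

Lemma conj1 h : gconj 1 h = 1.
Proof. by rewrite /gconj -gmulA gmul1g gmulVg. Qed.

Lemma conj_by1 g : gconj g 1 = g.
Proof. by rewrite /gconj invg1 gmul1g mulg1. Qed.

Lemma conjJ g h1 h2 : gconj (gconj g h1) h2 = gconj g (h1 \* h2).
Proof. by rewrite /gconj invMg -!gmulA. Qed.

Lemma mul_comm_conj w z : w \* gcomm w z = gconj w z.
Proof. by rewrite /gcomm /gconj -!gmulA mulKVg. Qed.

Lemma comm_conj x Y : gcomm x Y = inv x \* gconj x Y.
Proof. by rewrite /gcomm /gconj -!gmulA. Qed.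

Lemma commMl a b c : gcomm (a \* b) c = gconj (gcomm a c) b \* gcomm b c.
Proof. by rewrite /gcomm /gconj invMg -!gmulA !mulKVg. Qed.

Lemma comm1l Y : gcomm 1 Y = 1.
Proof. by rewrite /gcomm invg1 gmul1g mulg1 gmulVg. Qed.

Lemma gprod_cat (s1 s2 : seq G) : gprod (s1 ++ s2) = gprod s1 \* gprod s2.
Proof. by elim: s1 => [|a s IH] /=; rewrite ?gmul1g // IH gmulA. Qed.

End GroupLemmas.

Section Construction.
Variable L : eqType.

Definition lnorm (p : L * seq L) : fcomm L :=
  foldl (fun b z => FComm b (FLet z)) (FLet p.1) p.2.

Lemma lnorm_rcons a s z : lnorm (a, rcons s z) = FComm (lnorm (a, s)) (FLet z).
Proof. by rewrite /lnorm /= -cats1 foldl_cat. Qed.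

Lemma lnorm_inj : injective lnorm.
Proof.
move=> [a s] [a' s']; elim/last_ind: s s' => [|s z IH] s';
  case/lastP: s' => [|s' z']; rewrite ?lnorm_rcons //=.
- by rewrite /lnorm /= => [[->]].
- by case=> /IH [-> ->] ->.
Qed.

Lemma occurs_head a s : occurs a (lnorm (a, s)).
Proof. by elim/last_ind: s => [|s z IH]; rewrite ?lnorm_rcons //=; left. Qed.

Lemma occurs_tail l a s : l \in s -> occurs l (lnorm (a, s)).
Proof.
elim/last_ind: s => [|s z IH] //; rewrite lnorm_rcons mem_rcons in_cons /=.
by case/orP => [/eqP ->|/IH]; [right|left].
Qed.

Lemma weight_lnorm a s : fweight (lnorm (a, s)) = (size s).+1.
Proof.
elim/last_ind: s => [|s z IH] //; rewrite lnorm_rcons /= IH size_rcons.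
by rewrite addn1.
Qed.

Lemma comp_lnorm l1 l2 a b s :
  component (FComm (FLet l1) (FLet l2)) (lnorm (a, b :: s)) -> l1 = a /\ l2 = b.
Proof.
elim/last_ind: s => [|s z IH].
  by rewrite /lnorm /= => [[//|[//|[-> ->]]]].
rewrite -rcons_cons lnorm_rcons /= => [[/IH //|[//|[E' _]]]].
move: E'; case/lastP: s {IH} => [|s z'] /=; first by rewrite /lnorm /= => E'; discriminate E'.
by rewrite -rcons_cons lnorm_rcons => E'; discriminate E'.
Qed.

Fixpoint cstep (W : seq (L * seq L)) (z : L) : seq (L * seq L) :=
  match W with
  | [::] => [::]
  | w :: W' => w :: (w.1, rcons w.2 z) :: cstep W' z
  end.

Definition conjs W zs := foldl cstep W zs.

Definition Acomm x ys := behead (conjs [:: (x, [::])] ys).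

Fixpoint E (xs ys : seq L) : seq (L * seq L) :=
  match xs with
  | [::] => [::]
  | x :: xs' => conjs (Acomm x ys) xs' ++ E xs' ys
  end.

Lemma mem_cstep (p : L * seq L) (W : seq (L * seq L)) (z : L) : p \in cstep W z ->
  p \in W \/ exists2 w, w \in W & p = (w.1, rcons w.2 z).
Proof.
elim: W => [|w W IH] //=; rewrite !in_cons.
case/or3P => [->|/eqP ->|/IH [H|[w' H1 H2]]]; first by left.
- by right; exists w; rewrite ?mem_head.
- by left; rewrite H orbT.
- by right; exists w'; rewrite ?in_cons ?H1 ?orbT.
Qed.

Lemma cstep_sub (p : L * seq L) (W : seq (L * seq L)) (z : L) : p \in W -> p \in cstep W z.
Proof.
elim: W => [|w W IH] //=; rewrite !in_cons.
by case/orP => [->|/IH ->] //; rewrite !orbT.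
Qed.

Lemma cstep_new (w : L * seq L) (W : seq (L * seq L)) (z : L) : w \in W -> (w.1, rcons w.2 z) \in cstep W z.
Proof.
elim: W => [|w' W IH] //=; rewrite !in_cons.
by case/orP => [/eqP ->|/IH ->]; rewrite ?eqxx ?orbT.
Qed.

Lemma conjs_sub (p : L * seq L) (W : seq (L * seq L)) (zs : seq L) : p \in W -> p \in conjs W zs.
Proof. by elim: zs W => [|z zs IH] W //= H; apply: IH; apply: cstep_sub. Qed.

Lemma conjs_head (w : L * seq L) (W : seq (L * seq L)) (zs : seq L) : exists R, conjs (w :: W) zs = w :: R.
Proof. by elim: zs W => [|z zs IH] W /=; [exists W|apply: IH]. Qed.

Lemma mem_conjs (a : L) (s : seq L) (W : seq (L * seq L)) (zs : seq L) : (a, s) \in conjs W zs ->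
  exists s0 s1, (a, s0) \in W /\ s = s0 ++ s1 /\ {subset s1 <= zs}.
Proof.
elim: zs W s => [|z zs IH] W s /=.
  by move=> H; exists s, [::]; rewrite cats0.
case/IH => s0 [s1 [/mem_cstep [H|[[a' t] H1 [-> ->]]] [-> Hs]]].
  by exists s0, s1; split=> //; split=> // l /Hs; rewrite in_cons orbC => ->.
exists t, (z :: s1); split=> //; split; first by rewrite cat_rcons.
by move=> l; rewrite !in_cons; case/orP => [->|/Hs ->]; rewrite ?orbT.
Qed.

Lemma uniq_cstep (W : seq (L * seq L)) (z : L) : uniq W -> (forall w, w \in W -> z \notin w.2) ->
  uniq (cstep W z).
Proof.
elim: W => [|w W IH] //= /andP [HwW HW] Hz.
have Hz' : forall w', w' \in W -> z \notin w'.2.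
  by move=> w' H; apply: Hz; rewrite in_cons H orbT.
have Hzw := Hz w (mem_head _ _).
rewrite IH // andbT in_cons negb_or; apply/andP; split; [apply/andP; split|].
- apply/eqP => Ew; move: Hzw; rewrite {1}Ew /= mem_rcons mem_head //.
- apply/negP => /mem_cstep [H|[w' H1 H2]]; first by rewrite H in HwW.
  by move: Hzw; rewrite H2 /= mem_rcons mem_head.
- apply/negP => /mem_cstep [H|[w' H1 H2]].
    by move: (Hz' _ H) => /=; rewrite mem_rcons mem_head.
  move: H1 H2; case: w' => a' s' H1 /= H2.
  case: w H2 {Hz Hzw IH} HwW => a0 s0 /= H2 HwW.
  have [E1 E3] : a0 = a' /\ rcons s0 z = rcons s' z by case: H2.
  have E2 : s0 = s' := rcons_injl z E3.
  by move: HwW; rewrite E1 E2 H1.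
Qed.

Lemma uniq_conjs (W : seq (L * seq L)) (zs : seq L) : uniq W -> uniq zs ->
  (forall w z, w \in W -> z \in zs -> z \notin w.2) -> uniq (conjs W zs).
Proof.
elim: zs W => [|z zs IH] W //= HW /andP [Hzzs Hzs] Hw.
apply: IH => //.
  by apply: uniq_cstep => // w Hw'; apply: Hw; rewrite ?mem_head.
move=> w' z' /mem_cstep [H|[w H1 ->]] Hz'.
  by apply: Hw; rewrite ?in_cons ?Hz' ?orbT.
rewrite /= mem_rcons in_cons negb_or; apply/andP; split.
  by apply/eqP => E'; move: Hzzs; rewrite -E' Hz'.
by apply: Hw; rewrite ?in_cons ?Hz' ?orbT.
Qed.

Lemma Acomm_eq x ys : conjs [:: (x, [::])] ys = (x, [::]) :: Acomm x ys.
Proof. by rewrite /Acomm; have [R ->] := conjs_head (x, [::]) [::] ys. Qed.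

Lemma uniq_A x ys : uniq ys -> uniq ((x, [::]) :: Acomm x ys).
Proof. by move=> Hys; rewrite -Acomm_eq; apply: uniq_conjs => // w z; rewrite inE => /eqP ->. Qed.

Lemma mem_A a s x ys : uniq ys -> (a, s) \in Acomm x ys ->
  a = x /\ s != [::] /\ {subset s <= ys}.
Proof.
move=> Hys H; have := uniq_A x Hys => /andP [Hn _].
have : (a, s) \in conjs [:: (x, [::])] ys by rewrite Acomm_eq in_cons H orbT.
case/mem_conjs => s0 [s1 []]; rewrite inE => /eqP [Ea Es0] [Es Hs].
subst a s0 s; split=> //; split=> //; rewrite /=; apply/negP => /eqP E'; subst s1.
by rewrite H in Hn.
Qed.

Lemma A2 x y ys : y \in ys -> (x, [:: y]) \in Acomm x ys.
Proof.
case/splitPr => ys1 ys2.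
have : (x, [:: y]) \in conjs [:: (x, [::])] (ys1 ++ y :: ys2).
  rewrite /conjs foldl_cat /=; apply: conjs_sub.
  apply: (@cstep_new (x, [::])); apply: conjs_sub; exact: mem_head.
rewrite Acomm_eq in_cons; case/orP => // /eqP E'; discriminate E'.
Qed.

Lemma mem_E a s xs ys : uniq ys -> (a, s) \in E xs ys ->
  a \in xs /\ exists b s', s = b :: s' /\ b \in ys.
Proof.
move=> Hys; elim: xs => [|x xs IH] //=; rewrite mem_cat.
case/orP => [/mem_conjs [s0 [s1 [/(mem_A Hys) [-> [Hn Hs]] [-> _]]]]|/IH [H1 H2]].
  split; first exact: mem_head.
  case: s0 Hn Hs => [|b s0] // _ Hs; exists b, (s0 ++ s1); split=> //.
  by apply: Hs; rewrite mem_head.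
by split; rewrite ?in_cons ?H1 ?orbT.
Qed.

Lemma mem_E2 x y xs ys : x \in xs -> y \in ys -> (x, [:: y]) \in E xs ys.
Proof.
move=> + Hy; elim: xs => [|x0 xs IH] //=; rewrite in_cons mem_cat.
case/orP => [/eqP ->|/IH ->]; last by rewrite orbT.
by rewrite conjs_sub // A2.
Qed.

Lemma uniq_E xs ys : uniq xs -> uniq ys -> (forall z, z \in xs -> z \notin ys) ->
  uniq (E xs ys).
Proof.
move=> + Hys; elim: xs => [|x xs IH] //= /andP [Hx Hxs] Hd.
rewrite cat_uniq IH ?andbT //; last by move=> z Hz; apply: Hd; rewrite in_cons Hz orbT.
apply/andP; split.
  apply: uniq_conjs => //; first by case/andP: (uniq_A x Hys).
  move=> [a s] z /(mem_A Hys) [_ [_ Hs]] Hz /=; apply/negP => /Hs Hzy.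
  by move: (Hd z); rewrite in_cons Hz orbT Hzy => /(_ isT).
apply/hasPn => [[a s]] /(mem_E Hys) [Ha _]; apply/negP.
case/mem_conjs => s0 [s1 [/(mem_A Hys) [Eax _] _]].
by move: Hx; rewrite -Eax Ha.
Qed.

Variable Gm : group.
Variable v : L -> Gm.
Definition ev p := feval v (lnorm p).

Lemma ev_rcons a s z : ev (a, rcons s z) = gcomm (ev (a, s)) (v z).
Proof. by rewrite /ev lnorm_rcons. Qed.

Lemma prod_cstep W z :
  gprod (map ev (cstep W z)) = gconj (gprod (map ev W)) (v z).
Proof.
elim: W => [|[a s] W IH] /=; first by rewrite conj1.
by rewrite IH conjM ev_rcons gmulA mul_comm_conj.
Qed.

Lemma prod_conjs W zs :
  gprod (map ev (conjs W zs)) = gconj (gprod (map ev W)) (gprod (map v zs)).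
Proof.
elim: zs W => [|z zs IH] W /=; first by rewrite conj_by1.
by rewrite IH prod_cstep conjJ.
Qed.

Lemma prod_A x ys :
  gprod (map ev (Acomm x ys)) = gcomm (v x) (gprod (map v ys)).
Proof.
have H := prod_conjs [:: (x, [::])] ys.
rewrite Acomm_eq /= mulg1 in H.
by rewrite comm_conj -H mulKg.
Qed.

Lemma prod_E xs ys :
  gprod (map ev (E xs ys)) = gcomm (gprod (map v xs)) (gprod (map v ys)).
Proof.
elim: xs => [|x xs IH] /=; first by rewrite comm1l.
by rewrite map_cat gprod_cat prod_conjs prod_A IH commMl.
Qed.

End Construction.

Lemma In_map_seq (A B : Type) (f : A -> B) a s :
  List.In a s -> List.In (f a) (map f s).
Proof. elim: s => [|b s IH] //= [->|/IH]; by [left|right]. Qed.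

Lemma In_map_inv (A : eqType) (B : Type) (f : A -> B) e s :
  List.In e (map f s) -> exists p, p \in s /\ e = f p.
Proof.
elim: s => [|b s IH] //= [<-|/IH [p [H1 H2]]].
  by exists b; rewrite mem_head.
by exists p; rewrite in_cons H1 orbT.
Qed.

Lemma mem_In (A : eqType) (a : A) s : a \in s -> List.In a s.
Proof.
elim: s => [|b s IH] //=; rewrite in_cons.
by case/orP => [/eqP ->|/IH]; [left|right].
Qed.

Lemma NoDup_map_inj (A : eqType) (B : Type) (f : A -> B) s :
  injective f -> uniq s -> List.NoDup (map f s).
Proof.
move=> Hf; elim: s => [|a s IH] /=; first by constructor.
case/andP => Ha Hs; constructor; last exact: IH.
move=> /(@In_map_inv A B) [p [Hp /Hf E']]; by move: Ha; rewrite E' Hp.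
Qed.

Theorem lemmaB5 (Gam : group) (m n : nat) (x : 'I_m -> Gam) (y : 'I_n -> Gam) :
  nilpotent Gam ->
  let val := fun l : 'I_m + 'I_n =>
               match l with inl i => x i | inr j => y j end in
  exists eta : seq (fcomm ('I_m + 'I_n)),
    (* (i) *)
    gcomm (gprod (map x (enum 'I_m))) (gprod (map y (enum 'I_n)))
      = gprod (map (feval val) eta) /\
    (* (ii) *)
    (forall (i : 'I_m) (i' : 'I_n),
        List.In (FComm (FLet (inl i)) (FLet (inr i'))) eta) /\
    (* (iii) *)
    (forall e, List.In e eta ->
        (exists i : 'I_m, occurs (inl i) e) /\
        (exists i' : 'I_n, occurs (inr i') e)) /\
    (* (iv) *)
    List.NoDup eta /\
    (* (v) *)
    (forall e, List.In e eta ->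
        (forall i i' : 'I_m, ~ component (FComm (FLet (inl i)) (FLet (inl i'))) e) /\
        (forall i i' : 'I_n, ~ component (FComm (FLet (inr i)) (FLet (inr i'))) e)) /\
    (* (vi) *)
    (forall e, List.In e eta ->
        (~ exists (i : 'I_m) (i' : 'I_n), e = FComm (FLet (inl i)) (FLet (inr i'))) ->
        (2 < fweight e)%N).
Proof.
move=> _ val.
pose xs : seq ('I_m + 'I_n) := map inl (enum 'I_m).
pose ys : seq ('I_m + 'I_n) := map inr (enum 'I_n).
have Hys : uniq ys by rewrite map_inj_uniq ?enum_uniq // => a b [].
have Hxs : uniq xs by rewrite map_inj_uniq ?enum_uniq // => a b [].
have Hd : forall z, z \in xs -> z \notin ys.
  by move=> z /mapP [i _ ->]; apply/mapP => [[j _]].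
have Hmem : forall e, List.In e (map (@lnorm _) (E xs ys)) ->
    exists i j s', e = lnorm (inl i, inr j :: s').
  move=> e /(@In_map_inv _ _ (@lnorm _) e) [[a s] [/(mem_E Hys) [Ha [b [s' [-> Hb]]]] ->]].
  case/mapP: Ha => i _ ->; case/mapP: Hb => j _ ->.
  by exists i, j, s'.
exists (map (@lnorm _) (E xs ys)); split.
  have -> : map (feval val) (map (@lnorm _) (E xs ys)) = map (ev val) (E xs ys).
    by rewrite -map_comp.
  rewrite prod_E /xs /ys -!map_comp; by [].

split.
  move=> i i'.
  have H : List.In (lnorm (inl i, [:: inr i'])) (map (@lnorm _) (E xs ys)).
    by apply: In_map_seq; apply: mem_In; apply: mem_E2; apply: map_f; rewrite mem_enum.
  exact: H.
split.
  move=> e /Hmem [i [j [s' ->]]]; split.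
    by exists i; exact: occurs_head.
  by exists j; apply: occurs_tail; exact: mem_head.
split.
  by apply: NoDup_map_inj; [exact: lnorm_inj | apply: uniq_E].
split.
  by move=> e /Hmem [i [j [s' ->]]]; split => k k' /comp_lnorm [E1 E2]; discriminate.
move=> e /Hmem [i [j [s' ->]]] Hn; rewrite weight_lnorm /=.
case: s' Hn => [|b s'] Hn //; exfalso; apply: Hn; by exists i, j.
Qed.
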